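(* Let $X$ be a real Hilbert space and let $A,B$ be closed convex nonempty subsets of $X$ such that the sets $E$ and $F$ (defined in the context) are nonempty. Consider the following conditions: (i) the couple $(A,B)$ is regular; (ii) the couple $(A,B)$ is boundedly regular; (iii) the couple $(A,B)$ is linearly regular for points bounded away from $E$. Then (iii) $\Leftrightarrow$ (i) $\Rightarrow$ (ii). Moreover, if $E$ is bounded, then (ii) $\Rightarrow$ (i).
   Context: For nonempty sets $S,T\subset X$: $\mathrm{dist}(x,S)=\inf_{s\in S}\|x-s\|$ and $\mathrm{dist}(S,T)=\inf_{s\in S}\mathrm{dist}(s,T)$. Define $E=\{a\in A:\ \mathrm{dist}(a,B)=\mathrm{dist}(A,B)\}$, $F=\{b\in B:\ \mathrm{dist}(b,A)=\mathrm{dist}(A,B)\}$, and let $v=P_{\overline{B-A}}(0)$ (the metric projection of $0$ onto the closure of $B-A=\{b-a: b\in B, a\in A\}$), called the displacement vector. The couple $(A,B)$ (with $E,F$ nonempty) is called: (1) regular if for each $\epsilon>0$ there is $\delta>0$ such that $\mathrm{dist}(x,E)\le\epsilon$ whenever $x\in X$ satisfies $\max\{\mathrm{dist}(x,A),\mathrm{dist}(x,B-v)\}\le\delta$; (2) boundedly regular if for each bounded set $S\subset X$ and each $\epsilon>0$ there is $\delta>0$ such that $\mathrm{dist}(x,E)\le\epsilon$ whenever $x\in S$ satisfies $\max\{\mathrm{dist}(x,A),\mathrm{dist}(x,B-v)\}\le\delta$; (3) linearly regular for points bounded away from $E$ if for each $\epsilon>0$ there is $K>0$ such that $\mathrm{dist}(x,E)\le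 K\max\{\mathrm{dist}(x,A),\mathrm{dist}(x,B-v)\}$ whenever $x\in X$ satisfies $\mathrm{dist}(x,E)\ge\epsilon$. *)

(* Defs.v *)
From HB Require Import structures.
From mathcomp Require Import all_boot all_order all_algebra.
From mathcomp Require Import all_classical all_reals all_analysis.
Set Implicit Arguments. Unset Strict Implicit. Unset Printing Implicit Defensive.
Import Order.TTheory GRing.Theory Num.Theory.
Import numFieldNormedType.Exports.
Local Open Scope classical_set_scope.
Local Open Scope ring_scope.

(* A real Hilbert space: a complete normed space V over R whose norm comes
   from an inner product [ip] (symmetric, bilinear, with |x|^2 = <x,x>). *)
Definition hilbert_inner (R : realType) (V : completeNormedModType R)
  (ip : V -> V -> R) : Prop :=
  [/\ forall x y, ip x y = ip y x,
      forall a x y z, ip (a *: x + y) z = a * ip x z + ip y z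
    & forall x, `|x| ^+ 2 = ip x x].

Definition convex (R : realType) (V : completeNormedModType R) (A : set V) :=
  forall x y (t : R), A x -> A y -> 0 <= t -> t <= 1 -> A (t *: x + (1 - t) *: y).

Definition dist (R : realType) (V : completeNormedModType R) (x : V) (S : set V) : R :=
  inf [set `|x - s| | s in S].

Definition dist_set (R : realType) (V : completeNormedModType R) (S T : set V) : R :=
  inf [set dist s T | s in S].

Definition setE (R : realType) (V : completeNormedModType R) (A B : set V) : set V :=
  [set a | A a /\ dist a B = dist_set A B].

Definition setF (R : realType) (V : completeNormedModType R) (A B : set V) : set V :=
  [set b | B b /\ dist b A = dist_set A B].

Definition set_diff (R : realType) (V : completeNormedModType R) (B A : set V) : set V :=
  [set b - a | b in B & a in A].

Definition translate_neg (R : realType) (V : completeNormedModType R) (S : set V) (v : V) : set V :=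
  [set s - v | s in S].

Definition is_metric_proj (R : realType) (V : completeNormedModType R) (C : set V) (x p : V) :=
  C p /\ forall c, C c -> `|x - p| <= `|x - c|.

Definition is_displacement (R : realType) (V : completeNormedModType R) (A B : set V) (v : V) :=
  is_metric_proj (closure (set_diff B A)) 0 v.

Definition regular (R : realType) (V : completeNormedModType R) (A B : set V) (v : V) :=
  forall eps : R, 0 < eps -> exists2 delta : R, 0 < delta &
    forall x : V, Num.max (dist x A) (dist x (translate_neg B v)) <= delta ->
      dist x (setE A B) <= eps.

Definition boundedly_regular (R : realType) (V : completeNormedModType R) (A B : set V) (v : V) :=
  forall S : set V, bounded_set S ->
  forall eps : R, 0 < eps -> exists2 delta : R, 0 < delta &
    forall x : V, S x -> Num.max (dist x A) (dist x (translate_neg B v)) <= delta ->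
      dist x (setE A B) <= eps.

Definition linearly_regular_away (R : realType) (V : completeNormedModType R) (A B : set V) (v : V) :=
  forall eps : R, 0 < eps -> exists2 K : R, 0 < K &
    forall x : V, eps <= dist x (setE A B) ->
      dist x (setE A B) <= K * Num.max (dist x A) (dist x (translate_neg B v)).

(* Main.v *)
Require Import Defs.
From HB Require Import structures.
From mathcomp Require Import all_boot all_order all_algebra.
From mathcomp Require Import all_classical all_reals all_analysis.
From mathcomp Require Import ring lra.
Import Order.TTheory GRing.Theory Num.Theory.
Import numFieldNormedType.Exports.
Local Open Scope classical_set_scope.
Local Open Scope ring_scope.

Lemma dist_lb {R : realType} {V : completeNormedModType R} (x : V) (S : set V) :
  has_lbound [set `|x - s| | s in S].
Proof. by exists 0 => _ [s _ <-]. Qed.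

Lemma dist_ge0 {R : realType} {V : completeNormedModType R} (x : V) (S : set V) :
  0 <= dist x S.
Proof.
rewrite /dist; case: (pselect (exists s, S s)) => [[s Ss]|nS]; last first.
  have -> : [set `|x - s| | s in S] = set0.
    by apply/seteqP; split => [y [s Ss _]|//]; case: nS; exists s.
  by rewrite inf0.
apply: lb_le_inf; first by exists `|x - s|; exists s.
by move=> _ [t _ <-].
Qed.

Lemma dist_le {R : realType} {V : completeNormedModType R} (x : V) (S : set V) s :
  S s -> dist x S <= `|x - s|.
Proof. by move=> Ss; apply: ge_inf; [exact: dist_lb | by exists s]. Qed.

Lemma dist_approx {R : realType} {V : completeNormedModType R} (x : V) (S : set V) (e : R) :
  S !=set0 -> 0 < e -> exists2 s, S s & `|x - s| < dist x S + e.
Proof.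
move=> [s Ss] e0.
have hi : has_inf [set `|x - s| | s in S] by split; [exists `|x - s|; exists s | exact: dist_lb].
have [_ [t St <-] H] := inf_adherent e0 hi.
by exists t.
Qed.

Lemma le_dist {R : realType} {V : completeNormedModType R} (x : V) (S : set V) c :
  S !=set0 -> (forall s, S s -> c <= `|x - s|) -> c <= dist x S.
Proof.
move=> [s Ss] H; apply: lb_le_inf; first by exists `|x - s|; exists s.
by move=> _ [t St <-]; exact: H.
Qed.

Lemma le_eps {R : realType} (a b : R) : (forall e, 0 < e -> a <= b + e) -> a <= b.
Proof.
move=> H; rewrite leNgt; apply/negP => ab.
have := H ((a - b) / 2); rewrite divr_gt0 ?subr_gt0 // => /(_ isT).
lra.
Qed.

Lemma dist_lip {R : realType} {V : completeNormedModType R} (x y : V) (S : set V) :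
  S !=set0 -> dist x S <= `|x - y| + dist y S.
Proof.
move=> S0.
suff : dist x S - `|x - y| <= dist y S by lra.
apply: le_dist => // s Ss.
have h1 := dist_le x _ _ Ss.
have h2 : `|x - s| <= `|x - y| + `|y - s|.
  have -> : x - s = (x - y) + (y - s) by rewrite addrA subrK.
  exact: ler_normD.
lra.
Qed.

Lemma dist_convex {R : realType} {V : completeNormedModType R} (C : set V) x p l :
  convex C -> C !=set0 -> 0 <= l -> l <= 1 ->
  dist (l *: x + (1 - l) *: p) C <= l * dist x C + (1 - l) * dist p C.
Proof.
move=> cC C0 l0 l1; apply: le_eps => e e0.
have [c1 Cc1 H1] := dist_approx x C e C0 e0.
have [c2 Cc2 H2] := dist_approx p C e C0 e0.
apply: le_trans (dist_le _ _ _ (cC _ _ _ Cc1 Cc2 l0 l1)) _.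
have -> : l *: x + (1 - l) *: p - (l *: c1 + (1 - l) *: c2)
   = l *: (x - c1) + (1 - l) *: (p - c2).
  by rewrite !scalerBr opprD !addrA; congr (_ + _); rewrite addrAC.
apply: le_trans (ler_normD _ _) _.
rewrite !normrZ (ger0_norm l0) (ger0_norm (_ : 0 <= 1 - l)) ?subr_ge0 //.
have h1 : l * `|x - c1| <= l * (dist x C + e) by rewrite ler_wpM2l // ltW.
have h2 : (1 - l) * `|p - c2| <= (1 - l) * (dist p C + e) by rewrite ler_wpM2l ?subr_ge0 // ltW.
lra.
Qed.

Lemma par_law {R : realType} {V : completeNormedModType R} (ip : V -> V -> R) :
  hilbert_inner ip -> forall x y : V,
  `|x + y| ^+ 2 + `|x - y| ^+ 2 = 2 * `|x| ^+ 2 + 2 * `|y| ^+ 2.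
Proof.
case=> sym lin nrm x y.
have ip0 z : ip 0 z = 0.
  by have := lin 1 0 0 z; rewrite scaler0 addr0 => h; lra.
have ipD a b z : ip (a + b) z = ip a z + ip b z.
  by have := lin 1 a b z; rewrite scale1r mul1r.
have ipN a z : ip (- a) z = - ip a z.
  by have := lin (-1) a 0 z; rewrite scaleN1r addr0 ip0 addr0 mulN1r.
rewrite !nrm !ipD !ipN (sym x (x + y)) (sym y (x + y)) (sym x (x - y)) (sym y (x - y)).
rewrite !ipD !ipN (sym x y).
lra.
Qed.

Lemma vsum4 {R : realType} {V : completeNormedModType R} (a b c d : V) :
  a - b + (c - d) = a + c - (b + d).
Proof. by rewrite opprD addrACA. Qed.

Lemma key {R : realType} {V : completeNormedModType R} (ip : V -> V -> R) (A B : set V) (v e : V) :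
  hilbert_inner ip -> convex A -> convex B -> A !=set0 -> B !=set0 ->
  is_displacement A B v -> setE A B e -> dist e (translate_neg B v) <= 0.
Proof.
move=> hH cA cB A0 B0 hd [Ae hde]; have [vcl hproj] := hd.
set N := `|v|.
set D := set_diff B A.
have N0 : 0 <= N by exact: normr_ge0.
have hmin w : D w -> N <= `|w|.
  by move=> Dw; have := hproj w (subset_closure Dw); rewrite !sub0r !normrN.
have hv eta : 0 < eta -> exists2 u, D u & `|v - u| < eta.
  move=> eta0; have [u [Du]] := vcl (ball v eta) (nbhsx_ballx v eta eta0).
  by rewrite -ball_normE /ball_ => h; exists u.
have h2 : (1 - 2^-1 : R) = 2^-1 by field.
have h20 : (0 : R) <= 2^-1 by rewrite invr_ge0.
have h21 : (2^-1 : R) <= 1 by rewrite invf_le1 // ler1n.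
have hmid u w : D u -> D w -> D (2^-1 *: (u + w)).
  move=> [b1 Bb1 [a1 Aa1 <-]] [b2 Bb2 [a2 Aa2 <-]].
  exists (2^-1 *: b1 + (1 - 2^-1) *: b2); first exact: cB.
  exists (2^-1 *: a1 + (1 - 2^-1) *: a2); first exact: cA.
  by rewrite h2 -!scalerDr -scalerBr vsum4.
have hpar u w : D u -> D w ->
    `|w - u| ^+ 2 <= 2 * `|w| ^+ 2 + 2 * `|u| ^+ 2 - 4 * N ^+ 2.
  move=> Du Dw; have := hmin _ (hmid _ _ Du Dw).
  rewrite normrZ ger0_norm // addrC => hm.
  have hp := par_law ip hH w u.
  have hm2 : 2 * N <= `|w + u| by lra.
  have : (2 * N) ^+ 2 <= `|w + u| ^+ 2 by rewrite lerXn2r // ?nnegrE ?mulr_ge0.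
  lra.
have hds : dist_set A B <= N.
  apply: le_eps => eta eta0.
  have [_ [b0 Bb0 [a0 Aa0 <-]] hu] := hv eta eta0.
  have h1 : dist_set A B <= dist a0 B.
    by apply: ge_inf; [exists 0 => _ [s _ <-]; exact: dist_ge0 | exists a0].
  have h3 := dist_le a0 _ _ Bb0.
  have h4 := ler_normB v (v - (b0 - a0)).
  rewrite opprB addrCA subrr addr0 in h4.
  rewrite distrC in h3.
  rewrite /N; lra.
have -> : (0 : R) = 0 + 0 by rewrite addr0.
apply: le_eps => tau tau0.
set c := 16 * (2 * N + 1).
have c0 : 0 < c by rewrite /c; lra.
set eta := Num.min 1 (Num.min (tau / 2) (tau ^+ 2 / c)).
have eta0 : 0 < eta.
  by rewrite /eta !lt_min ltr01 divr_gt0 //= ?divr_gt0 // exprn_gt0.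
have eta1 : eta <= 1 by rewrite /eta ge_min lexx.
have eta2 : eta <= tau / 2 by rewrite /eta !ge_min lexx orbT.
have eta3 : eta * c <= tau ^+ 2.
  by rewrite -ler_pdivlMr // /eta !ge_min lexx !orbT.
have [b Bb hb] := dist_approx e B eta B0 eta0.
have Dw : D (b - e) by exists b => //; exists e.
have [u Du hu] := hv eta eta0.
have hw : `|b - e| <= N + eta by rewrite distrC; lra.
have hu' : `|u| <= N + eta.
  have := ler_normB v (v - u); rewrite opprB addrCA subrr addr0; rewrite /N; lra.
have hp := hpar _ _ Du Dw.
have hw0 : 0 <= `|b - e| by [].
have hu0 : 0 <= `|u| by [].
have hwu : `|b - e - u| ^+ 2 <= (tau / 2) ^+ 2.
  rewrite /c in eta3; nra.
have hwu' : `|b - e - u| <= tau / 2.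
  by rewrite -(ler_pXn2r (n:=2)) // ?nnegrE // divr_ge0 // ltW.
apply: le_trans (dist_le e _ (b - v) _) _; first by exists b.
have -> : e - (b - v) = v - (b - e) by rewrite !opprB addrCA.
have := ler_distD u v (b - e); rewrite (distrC u) ; lra.
Qed.

Lemma convex_tr {R : realType} {V : completeNormedModType R} (C : set V) (v : V) :
  convex C -> convex (translate_neg C v).
Proof.
move=> cC x y t [a Ca <-] [b Cb <-] t0 t1; exists (t *: a + (1 - t) *: b); first exact: cC.
by rewrite !scalerBr vsum4 -scalerDl addrCA subrr addr0 scale1r.
Qed.

Lemma segE {R : realType} {V : completeNormedModType R} (l : R) (x p : V) :
  (l *: x + (1 - l) *: p) - p = l *: (x - p).
Proof. by rewrite scalerBl scale1r scalerBr addrA addrAC addrK. Qed.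

Lemma mconv {R : realType} {V : completeNormedModType R} (A C : set V) (x p : V) (l : R) :
  convex A -> convex C -> A !=set0 -> C !=set0 -> A p -> dist p C <= 0 ->
  0 <= l -> l <= 1 ->
  Num.max (dist (l *: x + (1 - l) *: p) A) (dist (l *: x + (1 - l) *: p) C)
  <= l * Num.max (dist x A) (dist x C).
Proof.
move=> cA cC A0 C0 Ap hp l0 l1.
have hA := dist_convex A x p l cA A0 l0 l1.
have hC := dist_convex C x p l cC C0 l0 l1.
have hpA : dist p A <= 0 by apply: le_trans (dist_le p _ _ Ap) _; rewrite subrr normr0.
have g1 := dist_ge0 p A; have g2 := dist_ge0 p C.
have m1 : dist x A <= Num.max (dist x A) (dist x C) by rewrite le_max lexx.
have m2 : dist x C <= Num.max (dist x A) (dist x C) by rewrite le_max lexx orbT.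
have e1 : l * dist x A <= l * Num.max (dist x A) (dist x C) by rewrite ler_wpM2l.
have e2 : l * dist x C <= l * Num.max (dist x A) (dist x C) by rewrite ler_wpM2l.
rewrite ge_max; apply/andP; split; nra.
Qed.

Theorem proposition3p2 (R : realType) (V : completeNormedModType R)
  (ip : V -> V -> R) (A B : set V) (v : V) :
  hilbert_inner ip ->
  closed A -> convex A -> A !=set0 ->
  closed B -> convex B -> B !=set0 ->
  setE A B !=set0 -> setF A B !=set0 ->
  is_displacement A B v ->
  [/\ (linearly_regular_away A B v <-> regular A B v),
      (regular A B v -> boundedly_regular A B v)
    & (bounded_set (setE A B) -> boundedly_regular A B v -> regular A B v)].
Proof.
move=> hH _ cA A0 _ cB B0 E0 _ hd.
set E := setE A B.
set Bv := translate_neg B v.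
have cBv : convex Bv := convex_tr B v cB.
have Bv0 : Bv !=set0 by case: B0 => b Bb; exists (b - v); exists b.
have hkey e : E e -> dist e Bv <= 0 by move=> Ee; exact: (key ip A B v e hH cA cB A0 B0 hd Ee).
have hEA e : E e -> A e by case.
have mge0 x : 0 <= Num.max (dist x A) (dist x Bv).
  by rewrite le_max dist_ge0.
split.
- split.
  + move=> hl eps eps0; have [K K0 hK] := hl eps eps0.
    exists (eps / (2 * K)); first by rewrite divr_gt0 // mulr_gt0.
    move=> x hx; case: (ltP (dist x E) eps) => [/ltW //|ge].
    have := hK x ge.
    have : K * Num.max (dist x A) (dist x Bv) <= K * (eps / (2 * K)) by rewrite ler_wpM2l // ltW.
    have -> : K * (eps / (2 * K)) = eps / 2 by field; rewrite gt_eqF.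
    lra.
  + move=> hr eps eps0.
    have eps20 : 0 < eps / 2 by rewrite divr_gt0.
    have [delta d0 hdel] := hr _ eps20.
    exists (eps / delta); first by rewrite divr_gt0.
    move=> x hx.
    have eps40 : 0 < eps / 4 by rewrite divr_gt0.
    have [e Ee he] := dist_approx x E _ E0 eps40.
    set r := `|x - e| in he.
    have dr : dist x E <= r := dist_le x _ _ Ee.
    have r0 : 0 < r by lra.
    set l := (3 * eps / 4) / r.
    have lr : l * r = 3 * eps / 4 by rewrite /l; field; rewrite gt_eqF.
    have l0 : 0 <= l by rewrite /l divr_ge0 // ?ltW // divr_gt0 // mulr_gt0.
    have l1 : l <= 1 by rewrite /l ler_pdivrMr // mul1r; lra.
    set y := l *: x + (1 - l) *: e.
    have hm := mconv A Bv x e l cA cBv A0 Bv0 (hEA _ Ee) (hkey _ Ee) l0 l1.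
    have hxy : `|x - y| = (1 - l) * r.
      have -> : x - y = (x - e) - (y - e) by rewrite opprB addrA subrK.
      rewrite /y segE -{1}(scale1r (x - e)) -scalerBl normrZ ger0_norm //.
      by rewrite subr_ge0.
    have hlip := dist_lip x y E E0.
    have hyE : eps / 2 < dist y E by nra.
    have hmy : delta < Num.max (dist y A) (dist y Bv).
      rewrite ltNge; apply/negP => /hdel; lra.
    have : delta * r < (l * Num.max (dist x A) (dist x Bv)) * r.
      rewrite ltr_pM2r //; exact: lt_le_trans hmy hm.
    rewrite mulrAC lr => hfin.
    rewrite mulrAC ler_pdivlMr //.
    have := mge0 x; nra.
- move=> hr S _ eps eps0; have [delta d0 hdel] := hr eps eps0.
  by exists delta => // x _; exact: hdel.
- move=> hE hB eps eps0.
  case: hE => M [_ HM].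
  have HM1 : forall s, E s -> `|s| <= M + 1.
    move=> s Es; have hM1 : M < M + 1 by lra.
    exact: (HM (M + 1) hM1 s Es).
  case: (E0) => e0 Ee0.
  have M10 : 0 <= M + 1 by apply: le_trans (HM1 _ Ee0).
  set R0 := 2 * (M + 1) + eps + 1.
  set S := [set x | `|x - e0| <= R0].
  have hS : bounded_set S.
    exists (R0 + (M + 1)); split; first exact: num_real.
    move=> M' hM' x Sx /=.
    have := ler_distD e0 x 0; rewrite !subr0 => h.
    have := HM1 _ Ee0; rewrite /S /= in Sx; lra.
  have [delta d0 hdel] := hB S hS eps eps0.
  exists delta => // x hx.
  case: (leP `|x - e0| R0) => [hxS|hxS]; first exact: hdel.
  exfalso.
  set r := `|x - e0| in hxS.
  have R00 : 0 < R0 by rewrite /R0; lra.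
  have r0 : 0 < r by lra.
  set l := R0 / r.
  have lr : l * r = R0 by rewrite /l; field; rewrite gt_eqF.
  have l0 : 0 <= l by rewrite /l divr_ge0 // ltW.
  have l1 : l <= 1 by rewrite /l ler_pdivrMr // mul1r ltW.
  set y := l *: x + (1 - l) *: e0.
  have hm := mconv A Bv x e0 l cA cBv A0 Bv0 (hEA _ Ee0) (hkey _ Ee0) l0 l1.
  have hye : `|y - e0| = R0 by rewrite /y segE normrZ ger0_norm.
  have Sy : S y by rewrite /S /= hye.
  have hmy : Num.max (dist y A) (dist y Bv) <= delta.
    apply: le_trans hm _; have := mge0 x; nra.
  have := hdel y Sy hmy.
  have : eps + 1 <= dist y E.
    apply: le_dist => // s Es.
    have := ler_distD s y e0; have := ler_normB s e0.
    have := HM1 _ Es; have := HM1 _ Ee0; rewrite hye /R0; lra.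
  lra.
Qed.
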